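(* Let $R=\mathbb{Z}_4+u\mathbb{Z}_4$ with $u^2=0$, and let $C=\langle a(x)+ub(x)\rangle$ be the $(1+2u)$-constacyclic code of length $n$ over $R$ given by the ideal of $R[x]/\langle x^n-(1+2u)\rangle$ generated by $a(x)+ub(x)$, where $a(x),b(x)\in\mathbb{Z}_4[x]$ have degree $<n$. Let $\phi:R^n\to\mathbb{Z}_4^{2n}$ be the Gray map $\phi(c_0,\dots,c_{n-1})=(b_0,\dots,b_{n-1},2a_0+b_0,\dots,2a_{n-1}+b_{n-1})$ with $c_i=a_i+ub_i$. Then $\phi(C)$ is a cyclic code over $\mathbb{Z}_4$ of length $2n$, namely the ideal of $\mathbb{Z}_4[x]/\langle x^{2n}-1\rangle$ generated by the polynomials $b(x)+x^n(2a(x)+b(x))$ and $a(x)+x^na(x)$.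
   Context: Vectors $(c_0,\dots,c_{m-1})$ are identified with polynomials $\sum_i c_ix^i$; thus codes of length $n$ over $R$ are subsets of $R[x]/\langle x^n-(1+2u)\rangle$ and codes of length $2n$ over $\mathbb{Z}_4$ are subsets of $\mathbb{Z}_4[x]/\langle x^{2n}-1\rangle$, where cyclic codes are exactly ideals. *)

(* Defs.v *)
From HB Require Import structures.
From mathcomp Require Import all_boot all_order all_algebra.
From mathcomp Require Import ring.
Set Implicit Arguments. Unset Strict Implicit. Unset Printing Implicit Defensive.
Import GRing.Theory.
Local Open Scope ring_scope.

(* The ring R = Z_4 + u Z_4 with u^2 = 0.  An element (a, b) stands for a + u b. *)
Definition R4 : Type := ('Z_4 * 'Z_4)%type.
HB.instance Definition _ := GRing.Zmodule.on R4.

Definition R4one : R4 := (1, 0).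
Definition R4mul (x y : R4) : R4 := (x.1 * y.1, x.1 * y.2 + x.2 * y.1).

Lemma R4mulA : associative R4mul.
Proof. case=> [a1 b1] [a2 b2] [a3 b3]; rewrite /R4mul /=; apply: injective_projections => /=; ring. Qed.
Lemma R4mulC : commutative R4mul.
Proof. case=> [a1 b1] [a2 b2]; rewrite /R4mul /=; apply: injective_projections => /=; ring. Qed.
Lemma R4mul1 : left_id R4one R4mul.
Proof. case=> [a b]; rewrite /R4mul /R4one /=; apply: injective_projections => /=; ring. Qed.
Lemma R4mulDl : left_distributive R4mul +%R.
Proof.
case=> [a1 b1] [a2 b2] [a3 b3]; rewrite /R4mul /=.
by apply: injective_projections => /=; ring.
Qed.
Lemma R4one_neq0 : R4one != 0.
Proof. by []. Qed.

HB.instance Definition _ :=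
  GRing.Zmodule_isComNzRing.Build R4 R4mulA R4mulC R4mul1 R4mulDl R4one_neq0.

Definition iotaR (x : 'Z_4) : R4 := (x, 0).
Definition uR : R4 := (0, 1).

(* The ideal <a(x) + u b(x)> of R[x]/<x^n - (1+2u)>, as the set of reduced
   representatives (polynomials of degree < n, i.e. vectors in R^n). *)
Definition constamod (n : nat) : {poly R4} := 'X^n - (1 + 2%:R * uR)%:P.

Definition constacode (n : nat) (a b : {poly 'Z_4}) : {poly R4} -> Prop :=
  fun c => exists f : {poly R4},
     c = Pdiv.Ring.rmodp (f * (map_poly iotaR a + uR%:P * map_poly iotaR b))
                         (constamod n).

Definition gray (n : nat) (c : {poly R4}) : {poly 'Z_4} :=
  \poly_(i < n) (c`_i).2 + 'X^n * \poly_(i < n) (2%:R * (c`_i).1 + (c`_i).2).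

Definition cycideal2 (n : nat) (g1 g2 : {poly 'Z_4}) : {poly 'Z_4} -> Prop :=
  fun v => exists f1 f2 : {poly 'Z_4},
     v = Pdiv.Ring.rmodp (f1 * g1 + f2 * g2) ('X^(2 * n) - 1).

(* Main.v *)
Require Import Defs.
From HB Require Import structures.
From mathcomp Require Import all_boot all_order all_algebra.
From mathcomp Require Import ring zify.
Import GRing.Theory.
Local Open Scope ring_scope.

Lemma iotaR_zmod : zmod_morphism iotaR.
Proof. by move=> x y; rewrite /iotaR; apply: injective_projections => //=; rewrite subr0. Qed.
HB.instance Definition _ := GRing.isZmodMorphism.Build _ _ iotaR iotaR_zmod.
Lemma iotaR_mon : monoid_morphism iotaR.
Proof. split => // x y; rewrite /iotaR; apply: injective_projections => /=; ring. Qed.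
HB.instance Definition _ := GRing.isMonoidMorphism.Build _ _ iotaR iotaR_mon.

Definition fstp (c : {poly R4}) : {poly 'Z_4} := map_poly (fun x : R4 => x.1) c.
Definition sndp (c : {poly R4}) : {poly 'Z_4} := map_poly (fun x : R4 => x.2) c.
Definition iP (p : {poly 'Z_4}) : {poly R4} := map_poly iotaR p.
Definition E (p q : {poly 'Z_4}) : {poly R4} := iP p + uR%:P * iP q.

Lemma coefE_ p q i : (E p q)`_i = (p`_i, q`_i).
Proof.
rewrite /E coefD coefCM /iP !coef_map /= /iotaR.
apply: injective_projections => /=; ring.
Qed.

Lemma fstE p q : fstp (E p q) = p.
Proof. by apply/polyP => i; rewrite /fstp coef_map_id0 // coefE_. Qed.
Lemma sndE p q : sndp (E p q) = q.
Proof. by apply/polyP => i; rewrite /sndp coef_map_id0 // coefE_. Qed.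
Lemma Edec c : c = E (fstp c) (sndp c).
Proof.
apply/polyP => i; rewrite coefE_ /fstp /sndp !coef_map_id0 //.
by rewrite -surjective_pairing.
Qed.
Lemma uu : uR%:P * uR%:P = 0 :> {poly R4}.
Proof. have h : uR * uR = 0 by apply/eqP. by rewrite -polyCM h. Qed.
Lemma EM p q p' q' : E p q * E p' q' = E (p * p') (p * q' + q * p').
Proof.
rewrite /E /iP !rmorphD !rmorphM /=.
have h := uu.
set U := uR%:P.
set A := map_poly iotaR p. set B := map_poly iotaR q.
set A' := map_poly iotaR p'. set B' := map_poly iotaR q'.
have -> : (A + U * B) * (A' + U * B') = A * A' + U * (A * B' + B * A') + (U * U) * (B * B') by ring.
by rewrite h mul0r addr0.
Qed.

Lemma ED p q p' q' : E p q + E p' q' = E (p + p') (q + q').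
Proof. rewrite /E /iP !rmorphD /=; ring. Qed.

Lemma ME n : constamod n = E ('X^n - 1) (- 2%:R).
Proof.
rewrite /constamod /E /iP rmorphB rmorphN rmorph_nat /= map_polyXn rmorph1.
rewrite polyCD polyCM polyC1 polyC_natr; ring.
Qed.

Lemma four0 : (4%:R : {poly 'Z_4}) = 0.
Proof. by rewrite -polyC_natr (_ : 4%:R = 0 :> 'Z_4) ?polyC0 //; apply/eqP. Qed.

Lemma gray_small n (c : {poly R4}) : (size c <= n)%N ->
  gray n c = sndp c + 'X^n * (2%:R * fstp c + sndp c).
Proof.
move=> hc; rewrite /gray; congr (_ + 'X^n * _); apply/polyP => i;
  rewrite ?coefD ?coefMn ?coefCM -?polyC_natr ?coefCM coef_poly /fstp /sndp !coef_map_id0 //;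
  case: ltnP => // hi; rewrite nth_default ?(leq_trans hc) //; ring.
Qed.

Lemma size_gray n (c : {poly R4}) : (size (gray n c) <= 2 * n)%N.
Proof.
rewrite /gray; apply: leq_trans (size_polyD _ _) _; rewrite geq_max; apply/andP; split.
  by apply: leq_trans (size_poly _ _) _; rewrite mul2n -addnn leq_addr.
apply: leq_trans (size_mul_leq _ _) _; rewrite size_polyXn.
have := size_poly n (fun i => 2%:R * (c`_i).1 + (c`_i).2).
rewrite mul2n -addnn addSn /=; by rewrite leq_add2l.
Qed.

Lemma key n (a b : {poly 'Z_4}) (f : {poly R4}) : (0 < n)%N ->
  gray n (Pdiv.Ring.rmodp (f * (map_poly iotaR a + uR%:P * map_poly iotaR b)) (constamod n))
  = Pdiv.Ring.rmodp (fstp f * (b + 'X^n * (2%:R *: a + b)) + sndp f * (a + 'X^n * a))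
                    ('X^(2 * n) - 1).
Proof.
move=> n0.
have monM : constamod n \is monic by rewrite /constamod monicXnsubC.
have mond : ('X^(2 * n) - 1 : {poly 'Z_4}) \is monic by rewrite -polyC1 monicXnsubC // muln_gt0.
set c := Pdiv.Ring.rmodp _ _.
have hsc : (size c <= n)%N.
  have := Pdiv.Ring.ltn_rmodp (f * (map_poly iotaR a + uR%:P * map_poly iotaR b)) (constamod n).
  rewrite /c /constamod size_XnsubC // ltnS => ->.
  by rewrite -size_poly_eq0 size_XnsubC.
have eq := Pdiv.RingMonic.rdivp_eq monM (f * (map_poly iotaR a + uR%:P * map_poly iotaR b)).
rewrite -/c in eq.
set q := Pdiv.Ring.rdivp _ _ in eq.
rewrite (Edec f) (Edec q) (Edec c) ME (_ : map_poly iotaR a + uR%:P * map_poly iotaR b = E a b) // in eq.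
rewrite !EM !ED in eq.
have e1 := congr1 fstp eq; have e2 := congr1 sndp eq.
rewrite !fstE in e1; rewrite !sndE in e2.
rewrite gray_small //.
set F1 := fstp f in e1 e2 *; set F2 := sndp f in e1 e2 *.
set Q1 := fstp q in e1 e2; set Q2 := sndp q in e1 e2.
set C1 := fstp c in e1 e2 *; set C2 := sndp c in e1 e2 *.
have -> : 'X^(2 * n) = 'X^n * 'X^n :> {poly 'Z_4} by rewrite mul2n -addnn exprD.
set Xn := 'X^n in e1 e2 *.
have -> : F1 * (b + Xn * (2%:R *: a + b)) + F2 * (a + Xn * a) =
   (2%:R * Q1 + Q2) * (Xn * Xn - 1) + (C2 + Xn * (2%:R * C1 + C2)).
  rewrite -mul_polyC polyC_natr.
  have -> : C1 = F1 * a - Q1 * (Xn - 1) by rewrite e1; ring.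
  have -> : C2 = F1 * b + F2 * a + 2%:R * Q1 - Q2 * (Xn - 1).
    rewrite (_ : C2 = F1 * b + F2 * a - (Q1 * - 2%:R + Q2 * (Xn - 1))); first by ring.
    by rewrite e2; ring.
  rewrite -[LHS]addr0 -(mulr0 (Q1 * Xn)) -four0; ring.
have hX : Xn * Xn - 1 = 'X^(2 * n) - (1 : 'Z_4)%:P by rewrite /Xn -exprD addnn -mul2n polyC1.
rewrite hX Pdiv.RingMonic.rmodp_addl_mul_small ?monicXnsubC ?muln_gt0 //.
rewrite size_XnsubC ?muln_gt0 // ltnS -gray_small //; exact: size_gray.
Qed.

Theorem theorem5p6 (n : nat) (a b : {poly 'Z_4}) :
  (0 < n)%N -> (size a <= n)%N -> (size b <= n)%N ->
  forall v : {poly 'Z_4},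
    (exists2 c : {poly R4}, constacode n a b c & v = gray n c) <->
    cycideal2 n (b + 'X^n * (2%:R *: a + b)) (a + 'X^n * a) v.
Proof.
move=> n0 _ _ v; split.
  case=> c [f ->] ->; exists (fstp f), (sndp f); exact: key.
case=> f1 [f2 ->].
exists (Pdiv.Ring.rmodp (E f1 f2 * (map_poly iotaR a + uR%:P * map_poly iotaR b)) (constamod n)).
  by exists (E f1 f2).
by rewrite key // fstE sndE.
Qed.
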